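(* Let $c_g\in\mathbb R$, $K_g\ge0$, $\mu\in\mathbb R$, $\sigma\ge0$, and let $g:\mathbb R\to\mathbb R$ satisfy $g(x)-g(y)\le\max\big(|e^{c_gx}-e^{c_gy}|,\,K_g|x-y|\big)$ for all $x,y\in\mathbb R$. Then there exist constants $C_1,C'$ depending only on $c_g,K_g,\mu,\sigma$ such that the following holds for every $\epsilon\in(0,1]$: if $X$ and $Z$ are independent real random variables, $X$ sub-Gaussian with mean $\mu$ and parameter $\sigma$, $Z$ sub-Gaussian with mean $0$ and parameter $\epsilon$, and $Y=X+Z$, $S_X=g(X)$, $S_Y=g(Y)$, then $$\mathbb E\big[(S_X-S_Y)^2\big]\le C_1\epsilon^2+C'\epsilon^4 .$$
   Context: A real random variable $W$ with mean $m$ is called sub-Gaussian with parameter $s\ge0$ if $\mathbb E[\exp(\theta(W-m))]\le\exp(\theta^2s^2/2)$ for all $\theta\in\mathbb R$ (in particular $\mathrm{Var}(W)\le s^2$). *)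

(* Defs.v *)
From HB Require Import structures.
From mathcomp Require Import all_boot all_order all_algebra.
From mathcomp Require Import all_classical all_reals all_analysis.
Set Implicit Arguments. Unset Strict Implicit. Unset Printing Implicit Defensive.
Import Order.TTheory GRing.Theory Num.Theory.
Local Open Scope classical_set_scope.
Local Open Scope ring_scope.

Definition independent_rv d (T : measurableType d) (R : realType)
  (P : probability T R) (X Z : T -> R) : Prop :=
  forall A B : set R, measurable A -> measurable B ->
    P (X @^-1` A `&` Z @^-1` B) = (P (X @^-1` A) * P (Z @^-1` B))%E.

Definition subgaussian d (T : measurableType d) (R : realType)
  (P : probability T R) (W : T -> R) (m s : R) : Prop :=
  [/\ 0 <= s,
      P.-integrable setT (EFin \o W),
      ('E_P[W] = m%:E)%E &
      forall theta : R,
        ('E_P[fun w => expR (theta * (W w - m))]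
          <= (expR (theta ^+ 2 * s ^+ 2 / 2))%:E)%E].

(* Main.v *)
Require Import Defs.
From HB Require Import structures.
From mathcomp Require Import all_boot all_order all_algebra.
From mathcomp Require Import all_classical all_reals all_analysis.
From mathcomp Require Import ring lra.
Import Order.TTheory GRing.Theory Num.Theory.
Local Open Scope ring_scope.

Section real_lemmas.
Variable R : realType.
Implicit Types u w t : R.

Lemma absexp1 u : `|expR u - 1| <= `|u| * expR `|u|.
Proof.
have h1 := expR_ge1Dx u. have h2 := expR_ge1Dx (- u).
have hp := expR_gt0 u.
have [hu|hu] := leP 0 u.
- rewrite ger0_norm //; last lra.
  rewrite ger0_norm //.
  have hh : expR (- u) * expR u = 1 by rewrite -expRD addNr expR0.
  nra.
- have hl : expR u <= 1 by rewrite -[1]expR0 ler_expR; lra.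
  rewrite ler0_norm; last lra.
  rewrite ltr0_norm //.
  have hh : 1 <= expR (- u) by rewrite -[1]expR0 ler_expR; lra.
  nra.
Qed.

Lemma expabs t : expR `|t| <= expR t + expR (- t).
Proof.
have h1 := expR_gt0 t. have h2 := expR_gt0 (- t).
have [ht|ht] := leP 0 t.
- rewrite ger0_norm //; lra.
- rewrite ltr0_norm //; lra.
Qed.

Lemma pow4_le w : w ^+ 4 <= 256 * expR `|w|.
Proof.
have w4 : w ^+ 4 = `|w| ^+ 4 by rewrite -normrX ger0_norm // exprn_even_ge0.
rewrite w4; have : 0 <= `|w| := normr_ge0 w.
move: `|w| => a ha.
have h := expR_ge1Dx (a / 4).
have e4 : expR a = expR (a / 4) ^+ 4.
  by rewrite -expRM_natl; congr expR; rewrite mulrC -mulrA mulVf ?mulr1.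
rewrite e4; move: h; move: (expR (a / 4)) => b h.
have hab : a / 4 <= b by lra.
have ha4 : 0 <= a / 4 by lra.
have : (a / 4) ^+ 4 <= b ^+ 4 by apply: lerXn2r => //; rewrite qualifE /=; lra.
have -> : (a / 4) ^+ 4 = a ^+ 4 / 256.
  by rewrite expr_div_n; congr (_ / _); rewrite -natrX.
lra.
Qed.

Lemma pow2_le w : w ^+ 2 <= 4 * expR `|w|.
Proof.
rewrite -real_normK ?num_real //.
have : 0 <= `|w| := normr_ge0 w.
move: `|w| => a ha.
have h := expR_ge1Dx (a / 2).
have e4 : expR a = expR (a / 2) ^+ 2.
  by rewrite -expRM_natl; congr expR; rewrite mulrC -mulrA mulVf ?mulr1.
rewrite e4; move: h; move: (expR (a / 2)) => b h.
nra.
Qed.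

Lemma ptw (c K mu eps : R) (g : R -> R)
  (hg : forall x y : R,
        g x - g y <= Num.max `|expR (c * x) - expR (c * y)| (K * `|x - y|))
  (he : 0 < eps) (hK : 0 <= K) (x z : R) :
  (g x - g (x + z)) ^+ 2 <=
    (eps ^+ 2 / 2 * expR (4 * c * mu)) * expR ((4 * c) * (x - mu))
  + (128 * c ^+ 4 * eps ^+ 2) * expR ((eps^-1 + 4 * `|c|) * (z - 0))
  + (128 * c ^+ 4 * eps ^+ 2) * expR ((- (eps^-1 + 4 * `|c|)) * (z - 0))
  + (4 * K ^+ 2 * eps ^+ 2) * expR (eps^-1 * (z - 0))
  + (4 * K ^+ 2 * eps ^+ 2) * expR ((- eps^-1) * (z - 0)).
Proof.
rewrite !subr0.
set D : R := g x - g (x + z).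
set A : R := `|expR (c * x) - expR (c * (x + z))|.
have hD : `|D| <= Num.max A (K * `|z|).
  rewrite ler_norml; apply/andP; split.
    rewrite lerNl opprB.
    have := hg (x + z) x.
    by rewrite distrC addrAC subrr add0r.
  have := hg x (x + z).
  by rewrite opprD addrA subrr sub0r normrN.
have hA0 : 0 <= A := normr_ge0 _.
have hKz : 0 <= K * `|z| by rewrite mulr_ge0.
have step2 : D ^+ 2 <= A ^+ 2 + K ^+ 2 * z ^+ 2.
  rewrite -(real_normK (num_real D)).
  have hD0 : 0 <= `|D| := normr_ge0 _.
  have hz2 : (K * `|z|) ^+ 2 = K ^+ 2 * z ^+ 2.
    by rewrite exprMn real_normK ?num_real.
  have [hm|hm] := leP A (K * `|z|).
    rewrite max_r // in hD.
    rewrite -hz2. have : 0 <= A ^+ 2 by apply: exprn_even_ge0. nra.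
  rewrite max_l in hD; last exact: ltW.
  have : 0 <= (K * `|z|) ^+ 2 by apply: exprn_even_ge0. rewrite hz2. nra.
set ie : R := eps^-1.
have hie : eps * ie = 1 by rewrite mulfV // gt_eqF.
have hie0 : 0 < ie by rewrite invr_gt0.
set ex : R := expR (c * x).
set u : R := c * z.
set p : R := ex ^+ 2.
set q : R := (expR u - 1) ^+ 2.
have hA2 : A ^+ 2 = p * q.
  rewrite /A real_normK ?num_real // mulrDr expRD -/ex -/u /p /q; ring.
have step4 : p * q <= eps ^+ 2 / 2 * p ^+ 2 + ie ^+ 2 / 2 * q ^+ 2.
  have h0 : 0 <= (eps * p - ie * q) ^+ 2 := sqr_ge0 _.
  have : (eps * p - ie * q) ^+ 2 = eps ^+ 2 * p ^+ 2 + ie ^+ 2 * q ^+ 2 - 2 * (eps * ie) * p * q by ring.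
  rewrite hie mulr1 => E; rewrite E in h0. nra.
have step5 : p ^+ 2 = expR (4 * c * mu) * expR ((4 * c) * (x - mu)).
  rewrite -expRD /p -exprM -expRM_natl; congr expR; ring.
have hz4 : z ^+ 4 = eps ^+ 4 * (ie * z) ^+ 4.
  by rewrite -exprMn mulrA hie mul1r.
have h6a : q ^+ 2 <= (`|u| * expR `|u|) ^+ 4.
  rewrite /q -exprM.
  have -> : (expR u - 1) ^+ (2 * 2) = `|expR u - 1| ^+ 4.
    by rewrite -normrX ger0_norm // exprn_even_ge0.
  apply: lerXn2r; rewrite ?qualifE /= ?normr_ge0 ?absexp1 //.
have h6b : (`|u| * expR `|u|) ^+ 4 = c ^+ 4 * z ^+ 4 * expR (4 * `|c| * `|z|).
  have e1 : `|u| ^+ 4 = c ^+ 4 * z ^+ 4.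
    by rewrite -normrX ger0_norm ?exprMn // mulr_ge0 // exprn_even_ge0.
  have e2 : expR `|u| ^+ 4 = expR (4 * `|c| * `|z|) by rewrite -expRM_natl /u normrM mulrA.
  by rewrite exprMn e1 e2.
have h6c : (ie * z) ^+ 4 <= 256 * expR (ie * `|z|).
  by have := pow4_le (ie * z); rewrite normrM (gtr0_norm hie0).
set th : R := ie + 4 * `|c|.
have hth : 0 <= th by rewrite /th addr_ge0 // ?mulr_ge0 // ltW.
have h6d : expR (ie * `|z|) * expR (4 * `|c| * `|z|) <= expR (th * z) + expR ((- th) * z).
  rewrite -expRD -mulrDl -/th mulNr; have := expabs (th * z); by rewrite normrM (ger0_norm hth).
have step6 : ie ^+ 2 / 2 * q ^+ 2 <= 128 * c ^+ 4 * eps ^+ 2 * expR (th * z)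
          + 128 * c ^+ 4 * eps ^+ 2 * expR ((- th) * z).
  have hc4 : 0 <= c ^+ 4 by rewrite exprn_even_ge0.
  have e1 := expR_gt0 (ie * `|z|). have e2 := expR_gt0 (4 * `|c| * `|z|).
  have hq : q ^+ 2 <= c ^+ 4 * (eps ^+ 4 * (256 * (expR (th * z) + expR ((- th) * z)))).
    apply: (le_trans h6a); rewrite h6b hz4 -mulrA.
    apply: ler_wpM2l => //.
    rewrite -mulrA; apply: ler_wpM2l; first by rewrite exprn_even_ge0.
    apply: (@le_trans _ _ (256 * expR (ie * `|z|) * expR (4 * `|c| * `|z|))).
      by apply: ler_wpM2r; [exact: ltW|].
    by rewrite -mulrA; apply: ler_wpM2l.
  have hie2 : ie ^+ 2 * eps ^+ 4 = eps ^+ 2.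
    have -> : eps ^+ 4 = eps ^+ 2 * eps ^+ 2 by rewrite -exprD.
    by rewrite mulrA -exprMn [ie * eps]mulrC hie expr1n mul1r.
  have hie20 : 0 <= ie ^+ 2 / 2 by rewrite divr_ge0 // exprn_even_ge0.
  apply: (le_trans (ler_wpM2l hie20 hq)).
  rewrite le_eqVlt; apply/orP; left; apply/eqP.
  have -> : ie ^+ 2 / 2 * (c ^+ 4 * (eps ^+ 4 * (256 * (expR (th * z) + expR (- th * z)))))
     = (ie ^+ 2 * eps ^+ 4) * (128 * c ^+ 4 * (expR (th * z) + expR (- th * z))) by field.
  rewrite hie2; ring.
have step7 : K ^+ 2 * z ^+ 2 <= 4 * K ^+ 2 * eps ^+ 2 * expR (ie * z)
        + 4 * K ^+ 2 * eps ^+ 2 * expR ((- ie) * z).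
  have hz2 : z ^+ 2 = eps ^+ 2 * (ie * z) ^+ 2 by rewrite -exprMn mulrA hie mul1r.
  have h2 := pow2_le (ie * z).
  have h3 := expabs (ie * z).
  rewrite hz2 mulNr.
  have hK2 : 0 <= K ^+ 2 * eps ^+ 2 by rewrite mulr_ge0 // exprn_even_ge0.
  have : K ^+ 2 * eps ^+ 2 * (ie * z) ^+ 2 <= K ^+ 2 * eps ^+ 2 * (4 * (expR (ie * z) + expR (- (ie * z))))
    by apply: ler_wpM2l => //; lra.
  move=> H; apply: (le_trans (_ : _ <= K ^+ 2 * eps ^+ 2 * (4 * (expR (ie * z) + expR (- (ie * z)))))).
    by rewrite mulrA.
  by rewrite le_eqVlt; apply/orP; left; apply/eqP; ring.
rewrite -/ie -/th.
have hp2 := step5.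
have : eps ^+ 2 / 2 * p ^+ 2 = eps ^+ 2 / 2 * expR (4 * c * mu) * expR (4 * c * (x - mu)) by rewrite step5 mulrA.
move: step2 step4 step6 step7; rewrite hA2.
lra.
Qed.
End real_lemmas.
Section integ.
Context d (T : measurableType d) (R : realType).
Variable mu : {measure set T -> \bar R}.

Lemma le_int_nm (f1 f2 : T -> \bar R) : (forall x, (0 <= f1 x)%E) ->
  (forall x, (f1 x <= f2 x)%E) -> (\int[mu]_x f1 x <= \int[mu]_x f2 x)%E.
Proof.
move=> h1 h12.
have h2 x : (0 <= f2 x)%E := le_trans (h1 x) (h12 x).
rewrite (ge0_integralTE _ h1) (ge0_integralTE _ h2) /=.
apply: ge_ereal_sup => _ [h hf <-].
apply: ereal_sup_ubound; exists h => // x /=.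
exact: le_trans (hf x) (h12 x).
Qed.

Lemma int_add (f g : T -> R) : measurable_fun setT f -> measurable_fun setT g ->
  (forall x, 0 <= f x) -> (forall x, 0 <= g x) ->
  (\int[mu]_x (f x + g x)%:E = \int[mu]_x (f x)%:E + \int[mu]_x (g x)%:E)%E.
Proof.
move=> mf mg f0 g0.
under eq_integral do rewrite EFinD.
apply: ge0_integralD => //.
- by move=> x _; rewrite lee_fin.
- exact/measurable_realfun.measurable_EFinP.
- by move=> x _; rewrite lee_fin.
- exact/measurable_realfun.measurable_EFinP.
Qed.

Lemma int_scale (a : R) (f : T -> R) : 0 <= a -> measurable_fun setT f ->
  (forall x, 0 <= f x) ->
  (\int[mu]_x (a * f x)%:E = a%:E * \int[mu]_x (f x)%:E)%E.
Proof.
move=> a0 mf f0.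
under eq_integral do rewrite EFinM.
apply: ge0_integralZl_EFin => //.
- by move=> x _; rewrite lee_fin.
- exact/measurable_realfun.measurable_EFinP.
Qed.

Lemma meas_exp (W : T -> R) (th m : R) : measurable_fun setT W ->
  measurable_fun setT (fun w => expR (th * (W w - m))).
Proof.
move=> mW.
apply: measurableT_comp; first exact: measurable_realfun.measurable_expR.
apply: measurableT_comp => //.
exact: (measurable_realfun.measurable_funB mW (measurable_cst m)).
Qed.

Lemma int_sum5 (a1 a2 a3 a4 a5 : R) (f1 f2 f3 f4 f5 : T -> R) :
  0 <= a1 -> 0 <= a2 -> 0 <= a3 -> 0 <= a4 -> 0 <= a5 ->
  measurable_fun setT f1 -> measurable_fun setT f2 -> measurable_fun setT f3 ->
  measurable_fun setT f4 -> measurable_fun setT f5 ->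
  (forall x, 0 <= f1 x) -> (forall x, 0 <= f2 x) -> (forall x, 0 <= f3 x) ->
  (forall x, 0 <= f4 x) -> (forall x, 0 <= f5 x) ->
  (\int[mu]_x (a1 * f1 x + a2 * f2 x + a3 * f3 x + a4 * f4 x + a5 * f5 x)%:E =
   a1%:E * \int[mu]_x (f1 x)%:E + a2%:E * \int[mu]_x (f2 x)%:E
   + a3%:E * \int[mu]_x (f3 x)%:E + a4%:E * \int[mu]_x (f4 x)%:E
   + a5%:E * \int[mu]_x (f5 x)%:E)%E.
Proof.
move=> h1 h2 h3 h4 h5 m1 m2 m3 m4 m5 p1 p2 p3 p4 p5.
have mg (a : R) (f : T -> R) : measurable_fun setT f ->
    measurable_fun setT (fun x => a * f x).
  by move=> mf; apply: measurableT_comp.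
have pg (a : R) (f : T -> R) : 0 <= a -> (forall x, 0 <= f x) ->
    forall x, 0 <= a * f x.
  by move=> ha hf x; rewrite mulr_ge0.
have m12 : measurable_fun setT (fun x => a1 * f1 x + a2 * f2 x) :=
  measurable_realfun.measurable_funD (mg a1 f1 m1) (mg a2 f2 m2).
have m123 : measurable_fun setT (fun x => a1 * f1 x + a2 * f2 x + a3 * f3 x) :=
  measurable_realfun.measurable_funD m12 (mg a3 f3 m3).
have m1234 : measurable_fun setT
    (fun x => a1 * f1 x + a2 * f2 x + a3 * f3 x + a4 * f4 x) :=
  measurable_realfun.measurable_funD m123 (mg a4 f4 m4).
have q12 x : 0 <= a1 * f1 x + a2 * f2 x by rewrite addr_ge0 ?pg.
have q123 x : 0 <= a1 * f1 x + a2 * f2 x + a3 * f3 x by rewrite addr_ge0 ?pg.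
have q1234 x : 0 <= a1 * f1 x + a2 * f2 x + a3 * f3 x + a4 * f4 x
  by rewrite addr_ge0 ?pg.
rewrite (int_add _ _ m1234 (mg a5 f5 m5) q1234 (pg a5 f5 h5 p5)).
rewrite (int_add _ _ m123 (mg a4 f4 m4) q123 (pg a4 f4 h4 p4)).
rewrite (int_add _ _ m12 (mg a3 f3 m3) q12 (pg a3 f3 h3 p3)).
rewrite (int_add _ _ (mg a1 f1 m1) (mg a2 f2 m2) (pg a1 f1 h1 p1) (pg a2 f2 h2 p2)).
by rewrite !int_scale.
Qed.

End integ.

Lemma fin_bound (R : realType) (x : \bar R) (b : R) : (0 <= x)%E -> (x <= b%:E)%E ->
  exists r, x = r%:E /\ 0 <= r /\ r <= b.
Proof.
move: x => [r| |] //= h0 h1.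
by exists r; rewrite -!lee_fin.
Qed.

Theorem lemma1 (R : realType) (c_g K_g mu sigma : R) (hK : 0 <= K_g)
  (hsigma : 0 <= sigma) :
  exists C1 C' : R,
  forall g : R -> R,
    (forall x y : R,
        g x - g y <= Num.max `|expR (c_g * x) - expR (c_g * y)| (K_g * `|x - y|)) ->
  forall eps : R, 0 < eps -> eps <= 1 ->
  forall (d : measure_display) (T : measurableType d) (P : probability T R)
         (X Z : T -> R),
    measurable_fun setT X -> measurable_fun setT Z ->
    independent_rv P X Z ->
    subgaussian P X mu sigma ->
    subgaussian P Z 0 eps ->
    let Y := fun w => X w + Z w in
    let S_X := fun w => g (X w) in
    let S_Y := fun w => g (Y w) in
    ('E_P[fun w => ((S_X w - S_Y w) ^+ 2)%R]
       <= (C1 * eps ^+ 2 + C' * eps ^+ 4)%:E)%E.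
Proof.
set B1 := expR ((4 * c_g) ^+ 2 * sigma ^+ 2 / 2).
set B2 := expR ((1 + 4 * `|c_g|) ^+ 2 / 2).
set B3 := expR (1 / 2) : R.
exists (expR (4 * c_g * mu) / 2 * B1 + 256 * c_g ^+ 4 * B2 + 8 * K_g ^+ 2 * B3), 0.
move=> g hg eps he he1 d T P X Z mX mZ _ [_ _ _ hX] [_ _ _ hZ]; cbv zeta.
move: hX hZ; rewrite unlock => hX hZ.

set ie : R := eps^-1.
set th : R := ie + 4 * `|c_g|.
set a1 : R := eps ^+ 2 / 2 * expR (4 * c_g * mu).
set a2 : R := 128 * c_g ^+ 4 * eps ^+ 2.
set a3 : R := 4 * K_g ^+ 2 * eps ^+ 2.
pose f1 := fun w => expR ((4 * c_g) * (X w - mu)).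
pose f2 := fun w => expR (th * (Z w - 0)).
pose f3 := fun w => expR ((- th) * (Z w - 0)).
pose f4 := fun w => expR (ie * (Z w - 0)).
pose f5 := fun w => expR ((- ie) * (Z w - 0)).
apply: (le_trans (@le_int_nm _ _ _ P _ (fun w => (a1 * f1 w + a2 * f2 w + a2 * f3 w + a3 * f4 w + a3 * f5 w)%:E) _ _)).
- by move=> w; rewrite lee_fin sqr_ge0.
- by move=> w; rewrite lee_fin; exact: ptw.
have mf (W : T -> R) (t m : R) : measurable_fun setT W ->
    measurable_fun setT (fun w => expR (t * (W w - m))) := @meas_exp _ _ _ W t m.
have pf (W : T -> R) (t m : R) (w : T) : 0 <= expR (t * (W w - m)) := expR_ge0 _.
have ha1 : 0 <= a1 by rewrite /a1 mulr_ge0 ?divr_ge0 ?sqr_ge0 ?expR_ge0.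
have ha2 : 0 <= a2 by rewrite /a2 mulr_ge0 ?sqr_ge0 // mulr_ge0 // exprn_even_ge0.
have ha3 : 0 <= a3 by rewrite /a3 mulr_ge0 ?sqr_ge0 // mulr_ge0 // sqr_ge0.
rewrite (@int_sum5 _ _ _ P a1 a2 a2 a3 a3 f1 f2 f3 f4 f5) //; try exact: mf; try exact: pf.
have fb (W : T -> R) (t m b : R) :
    (\int[P]_w (expR (t * (W w - m)))%:E <= b%:E)%E ->
    exists r : R, (\int[P]_w (expR (t * (W w - m)))%:E = r%:E)%E /\ 0 <= r /\ r <= b.
  move=> hb; apply: fin_bound => //.
  by apply: integral_ge0 => w _; rewrite lee_fin expR_ge0.
have [r1 [-> [r10 r1b]]] := fb _ _ _ _ (hX (4 * c_g)).
have [r2 [-> [r20 r2b]]] := fb _ _ _ _ (hZ th).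
have [r3 [-> [r30 r3b]]] := fb _ _ _ _ (hZ (- th)).
have [r4 [-> [r40 r4b]]] := fb _ _ _ _ (hZ ie).
have [r5 [-> [r50 r5b]]] := fb _ _ _ _ (hZ (- ie)).
rewrite -!EFinM -!EFinD lee_fin.
have hie : ie * eps = 1 by rewrite mulrC mulfV // gt_eqF.
have e4 : ie ^+ 2 * eps ^+ 2 / 2 = 1 / 2 by rewrite -exprMn hie expr1n.
rewrite sqrrN e4 in r5b; rewrite e4 in r4b.
have ht : th ^+ 2 * eps ^+ 2 / 2 <= (1 + 4 * `|c_g|) ^+ 2 / 2.
  rewrite -exprMn.
  have -> : th * eps = 1 + 4 * `|c_g| * eps by rewrite /th mulrDl hie.
  have hc : 0 <= `|c_g| := normr_ge0 _.
  have h1 : 4 * `|c_g| * eps <= 4 * `|c_g| by nra.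
  have h2 : 0 <= 4 * `|c_g| * eps by nra.
  nra.
rewrite sqrrN in r3b.
have r2B : r2 <= B2 by apply: (le_trans r2b); rewrite ler_expR.
have r3B : r3 <= B2 by apply: (le_trans r3b); rewrite ler_expR.
have s1 : a1 * r1 <= a1 * B1 by apply: ler_wpM2l.
have s2 : a2 * r2 <= a2 * B2 by apply: ler_wpM2l.
have s3 : a2 * r3 <= a2 * B2 by apply: ler_wpM2l.
have s4 : a3 * r4 <= a3 * B3 by apply: ler_wpM2l.
have s5 : a3 * r5 <= a3 * B3 by apply: ler_wpM2l.
have -> : (expR (4 * c_g * mu) / 2 * B1 + 256 * c_g ^+ 4 * B2 + 8 * K_g ^+ 2 * B3) *
  eps ^+ 2 + 0 * eps ^+ 4 = a1 * B1 + a2 * B2 + a2 * B2 + a3 * B3 + a3 * B3.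
  rewrite /a1 /a2 /a3; ring.
lra.
Qed.
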